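(* Let $\Lambda\in\mathcal Q_n$. The statements within each of (i)–(iv) are equivalent. (i) For $\mathbf F\in\mathcal M^n$: (a) $\Lambda\mathbf F\prec_{\mathrm{st}}\mathbf F$; (b) $\mathbf F\prec_{\mathrm{st}}\Lambda\mathbf F$; (c) $\Lambda\mathbf F=\mathbf F$. (ii) For $\mathbf F\in\mathcal M^n$: (a) $\Lambda\otimes\mathbf F\prec_{\mathrm{st}}\mathbf F$; (b) $\mathbf F\prec_{\mathrm{st}}\Lambda\otimes\mathbf F$; (c) $\Lambda\otimes\mathbf F=\mathbf F$. (iii) For $\mathbf F\in\mathcal M_1^n$: (a) $\Lambda\otimes\mathbf F\prec_{\mathrm{cx}}\mathbf F$; (b) $\mathbf F\prec_{\mathrm{cx}}\Lambda\otimes\mathbf F$; (c) $\Lambda\otimes\mathbf F=\mathbf F$. (iv) For $\mathbf F\in\mathcal M_1^n$: (a) $\Lambda\mathbf F\prec_{\mathrm{cx}}\mathbf F$; (b) $\Lambda\mathbf F=\mathbf F$.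
   Context: $\mathcal M$ is the set of cdfs on $\mathbb{R}$, $\mathcal M_1$ those with finite mean. $\mathcal Q_n$ is the set of $n\times n$ doubly stochastic matrices. For $\Lambda=(\Lambda_{ij})\in\mathcal Q_n$ and $\mathbf F=(F_1,\dots,F_n)$: $\Lambda\mathbf F$ is the tuple with $i$-th component $\sum_j\Lambda_{ij}F_j$ (distribution mixture); $\Lambda\otimes\mathbf F=(G_1,\dots,G_n)$ with $G_i^{-1}=\sum_j\Lambda_{ij}F_j^{-1}$ (quantile mixture), where $F^{-1}(p)=\inf\{x:F(x)\ge p\}$. For cdfs, $F\prec_{\mathrm{st}}G$ means $F\ge G$ pointwise; for $F,G\in\mathcal M_1$, $F\prec_{\mathrm{cx}}G$ means $\int\phi\,\mathrm dF\le\int\phi\,\mathrm dG$ for all convex $\phi$. For tuples these orders are taken componentwise. *)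

(* Defs.v *)
From HB Require Import structures.
From mathcomp Require Import all_boot all_order all_algebra.
From mathcomp Require Import all_classical all_reals.
From mathcomp Require Import topology normedtype sequences realfun measure
  lebesgue_measure lebesgue_integral lebesgue_stieltjes_measure.

Set Implicit Arguments.
Unset Strict Implicit.
Unset Printing Implicit Defensive.
Import Order.TTheory GRing.Theory Num.Theory.
Import numFieldTopology.Exports.

Local Open Scope classical_set_scope.
Local Open Scope ring_scope.

Section cdfs.
Context {R : realType}.

Definition is_cdf (F : R -> R) : Prop :=
  [/\ {homo F : x y / x <= y}, right_continuous F,
      F @ -oo --> (0:R) & F @ +oo --> (1:R)].

(* The cdf of the Dirac mass at 0 (only used as a harmless default). *)
Definition step_cdf (x : R) : R := if x < 0 then 0 else 1.

(* [to_cdf G] is G itself when G is a cdf (the only case in which it is used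
   below); it is only needed to equip G with the library's cumulative
   structure, hence its Lebesgue--Stieltjes (probability) measure. *)
Definition to_cdf (G : R -> R) : R -> R :=
  if asbool (is_cdf G) then G else step_cdf.

Lemma step_cdf_is_cdf : is_cdf step_cdf.
Proof.
split.
- move=> x y xy; rewrite /step_cdf.
  case: ifPn => x0; case: ifPn => y0 //; rewrite ?lexx ?ler01 //.
  by rewrite (le_lt_trans xy y0) in x0.
- move=> x; apply: (cvg_near_cst (step_cdf x)).
  rewrite /step_cdf; case: ifPn => x0.
  + near=> y; suff -> : y < 0 by [].
    by near: y; exact: (nbhs_right_lt x0).
  + near=> y; suff -> : (y < 0) = false by [].
    apply/negbTE; rewrite -leNgt.
    rewrite -leNgt in x0; apply: (le_trans x0); apply: ltW.
    by near: y; exact: nbhs_right_gt.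
- apply: (cvg_near_cst (0:R)); near=> y; rewrite /step_cdf.
  suff -> : y < 0 by [].
  by near: y; apply: nbhs_ninfty_lt; exact: num_real.
- apply: (cvg_near_cst (1:R)); near=> y; rewrite /step_cdf.
  suff -> : (y < 0) = false by [].
  apply/negbTE; rewrite -leNgt.
  by near: y; apply: nbhs_pinfty_ge; exact: num_real.
Unshelve. all: by end_near.
Qed.

Lemma to_cdf_is_cdf (G : R -> R) : is_cdf (to_cdf G).
Proof.
rewrite /to_cdf; case: (asboolP (is_cdf G)) => // _; exact: step_cdf_is_cdf.
Qed.

Lemma to_cdf_nd G : {homo to_cdf G : x y / x <= y}.
Proof. by case: (to_cdf_is_cdf G). Qed.
Lemma to_cdf_rc G : right_continuous (to_cdf G).
Proof. by case: (to_cdf_is_cdf G). Qed.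
Lemma to_cdf_Ny G : to_cdf G @ -oo --> (0:R).
Proof. by case: (to_cdf_is_cdf G). Qed.
Lemma to_cdf_y G : to_cdf G @ +oo --> (1:R).
Proof. by case: (to_cdf_is_cdf G). Qed.

HB.instance Definition _ (G : R -> R) :=
  isCumulative.Build R _ R (to_cdf G) (@to_cdf_nd G) (@to_cdf_rc G).
HB.instance Definition _ (G : R -> R) :=
  isCumulativeBounded.Build R 0 1 (to_cdf G) (@to_cdf_Ny G) (@to_cdf_y G).

Definition law (G : R -> R) := lebesgue_stieltjes_measure (to_cdf G).

Definition quantile (F : R -> R) (p : R) : R := inf [set x | p <= F x].

(* The cdf whose quantile function on (0,1) is the (left-continuous,
   nondecreasing) function Q:  G(x) = sup {p in (0,1) | Q p <= x}
   (with sup of the empty set = 0). *)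
Definition cdf_of_quantile (Q : R -> R) (x : R) : R :=
  sup [set p | 0 < p < 1 /\ Q p <= x].

Definition doubly_stochastic (n : nat) (L : 'M[R]_n) : Prop :=
  [/\ forall i j, 0 <= L i j,
      forall i, \sum_j L i j = 1 &
      forall j, \sum_i L i j = 1].

Definition dmix (n : nat) (L : 'M[R]_n) (F : 'I_n -> R -> R) : 'I_n -> R -> R :=
  fun i x => \sum_j L i j * F j x.

Definition qmix (n : nat) (L : 'M[R]_n) (F : 'I_n -> R -> R) : 'I_n -> R -> R :=
  fun i => cdf_of_quantile (fun p => \sum_j L i j * quantile (F j) p).

Definition st_le (n : nat) (F G : 'I_n -> R -> R) : Prop :=
  forall i x, G i x <= F i x.

Definition convex_fun (phi : R -> R) : Prop :=
  forall (x y t : R), 0 <= t <= 1 ->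
    phi (t * x + (1 - t) * y) <= t * phi x + (1 - t) * phi y.

Definition finite_mean (F : R -> R) : Prop :=
  (\int[law F]_x (`|x|)%:E < +oo)%E.

Definition cx_le (n : nat) (F G : 'I_n -> R -> R) : Prop :=
  forall i (phi : R -> R), convex_fun phi ->
    (\int[law (F i)]_x (phi x)%:E <= \int[law (G i)]_x (phi x)%:E)%E.

End cdfs.

(* Main.v *)
Require Import Defs.
From HB Require Import structures.
From mathcomp Require Import all_boot all_order all_algebra.
From mathcomp Require Import all_classical all_reals.
From mathcomp Require Import topology normedtype sequences realfun measure
  lebesgue_measure lebesgue_integral lebesgue_stieltjes_measure.
From mathcomp Require Import ring lra measurable_realfun numfun.
Import Order.TTheory GRing.Theory Num.Theory.
Import numFieldTopology.Exports.
Local Open Scope classical_set_scope.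
Local Open Scope ring_scope.
Section P1.
Context {R : realType}.
Implicit Types (F G Q : R -> R).

Definition galois F Q := forall p x, 0 < p < 1 -> (Q p <= x <-> p <= F x).
Definition unitv F := forall x, 0 <= F x <= 1.
Definition nd_on Q := forall p p', 0 < p -> p <= p' -> p' < 1 -> Q p <= Q p'.
Definition lc_on Q := forall p x, 0 < p < 1 -> x < Q p ->
  exists p', 0 < p' < p /\ x < Q p'.

Lemma cdf_unit F : is_cdf F -> unitv F.
Proof.
case=> nd _ Fn Fp x; apply/andP; split.
- rewrite leNgt; apply/negP => Fx0.
  near (-oo : set_system R) => t.
  have : F t <= F x by apply: nd; near: t; apply: nbhs_ninfty_le; exact: num_real.
  apply/negP; rewrite -ltNge.
  by near: t; exact: (cvgr_gt 0 Fn).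
- rewrite leNgt; apply/negP => Fx1.
  near (+oo : set_system R) => t.
  have : F x <= F t by apply: nd; near: t; apply: nbhs_pinfty_ge; exact: num_real.
  apply/negP; rewrite -ltNge.
  by near: t; exact: (cvgr_lt 1 Fp).
Unshelve. all: by end_near.
Qed.


Lemma quantile_galois F : is_cdf F -> galois F (quantile F).
Proof.
move=> cF; have [nd rc Fn Fp] := cF.
move=> p x /andP[p0 p1].
rewrite /quantile; set S := [set x | p <= F x].
have S0 : S !=set0.
  near (+oo : set_system R) => y; exists y; rewrite /S /=; apply: ltW.
  by near: y; exact: (cvgr_gt 1 Fp).
have lbS : has_lbound S.
  near (-oo : set_system R) => y; exists y => z Sz.
  rewrite leNgt; apply/negP => zy.
  have := nd _ _ (ltW zy); rewrite leNgt => /negP; apply.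
  apply: (lt_le_trans _ Sz).
  by near: y; exact: (cvgr_lt 0 Fn).
have key : p <= F (inf S).
  rewrite leNgt; apply/negP => Fq.
  near (inf S)^'+ => y.
  have yS : inf S < y by near: y; exact: nbhs_right_gt.
  have [z Sz zy] := inf_lt S0 yS.
  have := nd _ _ (ltW zy); rewrite leNgt => /negP; apply.
  apply: (lt_le_trans _ Sz).
  by near: y; exact: (cvgr_lt _ (rc (inf S)) _ Fq).
split.
- by move=> qx; apply: (le_trans key); apply: nd.
- by move=> px; exact: (ge_inf lbS).
Unshelve. all: by end_near.
Qed.


Lemma galois_nd F Q : galois F Q -> nd_on Q.
Proof.
move=> g p p' p0 pp' p'1.
have h1 : 0 < p' < 1 by rewrite p'1 (lt_le_trans p0 pp').
have h0 : 0 < p < 1 by rewrite p0 (le_lt_trans pp' p'1).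
apply/(g p (Q p') h0).2; apply: (le_trans pp').
by apply/(g p' (Q p') h1).1.
Qed.

Lemma galois_lc F Q : unitv F -> galois F Q -> lc_on Q.
Proof.
move=> u g p x hp xQ; have /andP[p0 p1] := hp.
have Fxp : F x < p.
  rewrite ltNge; apply/negP => /(g p x hp).2; rewrite leNgt xQ //.
have /andP[Fx0 Fx1] := u x.
exists ((F x + p) / 2); split; first by apply/andP; split; lra.
rewrite ltNge; apply/negP => /(g ((F x + p) / 2) x _).1.
have -> : 0 < (F x + p) / 2 < 1 by apply/andP; split; lra.
by move=> /(_ isT); lra.
Qed.

Lemma cdfq_galois Q : nd_on Q -> lc_on Q ->
  galois (cdf_of_quantile Q) Q /\ unitv (cdf_of_quantile Q).
Proof.
move=> nd lc; rewrite /cdf_of_quantile.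
have ubS x : has_ubound [set p | 0 < p < 1 /\ Q p <= x].
  by exists 1 => p [/andP[_ /ltW]].
split.
- move=> p x hp; split.
  + by move=> Qpx; apply: ub_le_sup => //; split.
  + move=> psup; rewrite leNgt; apply/negP => xQ.
    have [p' [/andP[p'0 p'p] xQ']] := lc p x hp xQ.
    suff : sup [set p | 0 < p < 1 /\ Q p <= x] <= p'.
      by move=> h; have := le_trans psup h; rewrite leNgt p'p.
    have [[s Ss]|S0] := pselect ([set p | 0 < p < 1 /\ Q p <= x] !=set0).
      apply: ge_sup; first by exists s.
      move=> r [/andP[r0 r1] Qr]; rewrite leNgt; apply/negP => p'r.
      have := nd _ _ p'0 (ltW p'r) r1.
      by move=> h; have := le_trans h Qr; rewrite leNgt xQ'.
    have -> : [set p | 0 < p < 1 /\ Q p <= x] = set0.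
      by apply/seteqP; split => // r Sr; apply: S0; exists r.
    by rewrite sup0 ltW.
- move=> x.
  have [[s Ss]|S0] := pselect ([set p | 0 < p < 1 /\ Q p <= x] !=set0).
    apply/andP; split.
      have := ub_le_sup (ubS x) Ss; case: Ss => /andP[s0 _] _ h.
      exact: (le_trans (ltW s0) h).
    by apply: ge_sup; [exists s | move=> r [/andP[_ /ltW]]].
  have -> : [set p | 0 < p < 1 /\ Q p <= x] = set0.
    by apply/seteqP; split => // r Sr; apply: S0; exists r.
  by rewrite sup0 lexx ler01.
Qed.

Lemma galois_le F G Q Q' : unitv F -> unitv G -> galois F Q -> galois G Q' ->
  (forall p, 0 < p < 1 -> Q' p <= Q p) -> forall x, F x <= G x.
Proof.
move=> uF uG gF gG QQ x; rewrite leNgt; apply/negP => GF.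
have /andP[F0 F1] := uF x; have /andP[G0 G1] := uG x.
have hp : 0 < (G x + F x) / 2 < 1 by apply/andP; split; lra.
have h1 : (G x + F x) / 2 <= F x by lra.
have := (gF _ x hp).2 h1 => h2.
have := (gG _ x hp).1 (le_trans (QQ _ hp) h2).
lra.
Qed.

Lemma galois_cdf G Q : unitv G -> galois G Q -> is_cdf G.
Proof.
move=> u g.
have nd : {homo G : x y / x <= y}.
  move=> x y xy; rewrite leNgt; apply/negP => GyGx.
  have /andP[Fx0 Fx1] := u x; have /andP[Fy0 Fy1] := u y.
  have hp : 0 < (G y + G x) / 2 < 1 by apply/andP; split; lra.
  have h1 : (G y + G x) / 2 <= G x by lra.
  have := (g _ x hp).2 h1 => h2.
  have := (g _ y hp).1 (le_trans h2 xy); lra.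
split => //.
- move=> x; apply/cvgrPdist_lt => e e0.
  have /andP[Gx0 Gx1] := u x.
  have [ge1|lt1] := leP 1 (G x + e / 2).
    near=> y; have /andP[Gy0 Gy1] := u y.
    have : G x <= G y by apply: nd; apply: ltW; near: y; exact: nbhs_right_gt.
    move=> h; rewrite ler0_norm; [lra|lra].
  have hp : 0 < G x + e / 2 < 1 by apply/andP; split; lra.
  have xQ : x < Q (G x + e / 2).
    rewrite ltNge; apply/negP => /(g _ x hp).1; lra.
  near=> y; have /andP[Gy0 Gy1] := u y.
  have : G x <= G y by apply: nd; apply: ltW; near: y; exact: nbhs_right_gt.
  have : G y < G x + e / 2.
    rewrite ltNge; apply/negP => /(g _ y hp).2; rewrite leNgt => /negP; apply.
    by near: y; exact: nbhs_right_lt.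
  move=> h h'; rewrite ler0_norm; [lra|lra].
- apply/cvgrPdist_lt => e e0.
  have hp : 0 < Num.min (e / 2) (1 / 2) < 1.
    apply/andP; split; first by rewrite lt_min; apply/andP; split; lra.
    by rewrite gt_min; apply/orP; right; lra.
  near=> y; have /andP[Gy0 Gy1] := u y.
  have : G y < Num.min (e / 2) (1 / 2).
    rewrite ltNge; apply/negP => /(g _ y hp).2; rewrite leNgt => /negP; apply.
    by near: y; apply: nbhs_ninfty_lt; exact: num_real.
  rewrite lt_min => /andP[h1 h2].
  rewrite sub0r normrN ger0_norm //; lra.
- apply/cvgrPdist_lt => e e0.
  have hp : 0 < Num.max (1 - e / 2) (1 / 2) < 1.
    apply/andP; split; first by rewrite lt_max; apply/orP; right; lra.
    by rewrite gt_max; apply/andP; split; lra.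
  near=> y; have /andP[Gy0 Gy1] := u y.
  have : Num.max (1 - e / 2) (1 / 2) <= G y.
    apply/(g _ y hp).1.
    by near: y; apply: nbhs_pinfty_ge; exact: num_real.
  rewrite ge_max => /andP[h1 h2].
  rewrite ger0_norm; lra.
Unshelve. all: by end_near.
Qed.

End P1.
Section P1b.
Context {R : realType}.

Lemma mix_nd n (c : 'I_n -> R) (q : 'I_n -> R -> R) :
  (forall j, nd_on (q j)) -> (forall j, 0 <= c j) ->
  nd_on (fun p => \sum_j c j * q j p).
Proof.
move=> nd c0 p p' p0 pp' p'1; apply: ler_sum => j _.
by apply: ler_wpM2l => //; exact: nd.
Qed.

Lemma mix_lc n (c : 'I_n -> R) (q : 'I_n -> R -> R) :
  (forall j, nd_on (q j)) -> (forall j, lc_on (q j)) -> (forall j, 0 <= c j) ->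
  \sum_j c j = 1 ->
  lc_on (fun p => \sum_j c j * q j p).
Proof.
move=> nd lc c0 c1 p x hp xQ; have /andP[p0 p1] := hp.
set e := ((\sum_j c j * q j p) - x) / 2.
have e0 : 0 < e by rewrite /e; lra.
have /fin_all_exists [f hf] : forall j : 'I_n,
    exists p', 0 < p' < p /\ q j p - e < q j p'.
  by move=> j; apply: lc => //; lra.
pose p' := \big[Order.max/(p / 2)]_j f j.
have p'0 : 0 < p'.
  have h : p / 2 <= p' by rewrite /p'; exact: bigmax_ge_id.
  lra.
have p'p : p' < p.
  apply: bigmax_lt; first lra.
  by move=> j _; have [/andP[]] := hf j.
exists p'; split; first by rewrite p'0 p'p.
have : \sum_j c j * (q j p - e) <= \sum_j c j * q j p'.
  apply: ler_sum => j _; apply: ler_wpM2l => //.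
  have [/andP[fj0 _] h] := hf j.
  apply: (le_trans (ltW h)); apply: nd => //; first exact: le_bigmax.
  lra.
have -> : \sum_j c j * (q j p - e) = \sum_j c j * q j p - e.
  under eq_bigr do rewrite mulrBr.
  by rewrite sumrB -mulr_suml c1 mul1r.
rewrite /e; lra.
Qed.

Lemma sum_le_eq n (a b : 'I_n -> R) : (forall i, a i <= b i) ->
  \sum_i a i = \sum_i b i -> forall i, a i = b i.
Proof.
move=> ab s i.
have : \sum_i (b i - a i) = 0 by rewrite sumrB s subrr.
move/psumr_eq0P => h.
have : b i - a i = 0 by apply: h => // j _; rewrite subr_ge0.
by move=> /eqP; rewrite subr_eq0 => /eqP.
Qed.

End P1b.
Section P3.
Context {R : realType}.
Local Open Scope ereal_scope.

Lemma nd_on_measurable (Q : R -> R) : nd_on Q -> measurable_fun (`]0%R, 1%R[%classic : set R) Q.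
Proof.
move=> nd.
apply: (measurability (@RGenCInfty.G R)) => [|/= _ [_] [r] -> <-].
  exact: RGenCInfty.measurableE.
apply: is_interval_measurable => s t /= [].
rewrite !in_itv /= => /andP[s0 s1] Qs [] /andP[t0 t1] Qt u /andP[su ut].
split; first by rewrite in_itv /= (lt_le_trans s0 su) (le_lt_trans ut t1).
move: Qs; rewrite !in_itv /= !andbT => Qs.
apply: (le_trans Qs); apply: nd => //.
exact: (le_lt_trans ut t1).
Qed.

Lemma to_cdfE (F : R -> R) : is_cdf F -> to_cdf F = F.
Proof. by move=> h; rewrite /to_cdf asboolT. Qed.

Lemma law_oc (F : R -> R) (a b : R) : is_cdf F -> (a <= b)%R ->
  law F `]a, b]%classic = (F b - F a)%:E.
Proof.
move=> cF ab.
rewrite /law /lebesgue_stieltjes_measure /measure_extension /=.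
rewrite measurable_mu_extE /=; last exact: is_ocitv.
rewrite wlength_itv_bnd //.
have E x : to_cdf F x = F x by rewrite to_cdfE.
by rewrite !E.
Qed.

Lemma integral_mrestr (mu : {measure set (measurableTypeR R) -> \bar R})
    (D : set (measurableTypeR R)) (mD : measurable D)
    (h : measurableTypeR R -> \bar R) :
  measurable_fun [set: measurableTypeR R] h -> (forall x, 0 <= h x) ->
  \int[mrestr mu mD]_x h x = \int[mu]_(x in D) h x.
Proof.
move=> mh h0.
have -> : [set: measurableTypeR R] = D `|` ~` D by apply/esym; exact: setUv.
rewrite ge0_integral_setU //; last 3 first.
- exact: measurableC.
- exact: measurable_funTS.
- by apply/disj_setPCl.
rewrite [X in _ + X]null_set_integral //; last 3 first.
- exact: measurableC.
- exact: measurable_funTS.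
- by rewrite /= /mrestr setICl measure0.
rewrite adde0; apply: eq_measure_integral => A mA AD.
by rewrite /= /mrestr setIidl.
Qed.

Lemma itv_ocP (y c d : R) : (y \in `]c, d]) <-> (c < y <= d)%R.
Proof. by rewrite in_itv. Qed.
Lemma itv_ooP (y c d : R) : (y \in `]c, d[) <-> (c < y < d)%R.
Proof. by rewrite in_itv. Qed.

Definition D01 : set (measurableTypeR R) := `]0%R, 1%R[%classic.
Lemma mD01 : measurable D01. Proof. exact: measurable_itv. Qed.

Section law_push.
Variables (F Q : R -> R).
Hypotheses (cF : is_cdf F) (gQ : galois F Q).

Let mQ : measurable_fun [set: measurableTypeR R]
  ((Q : measurableTypeR R -> measurableTypeR R) \_ D01).
Proof.
have h : measurable_fun (D01 : set (measurableTypeR R))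
    (Q : measurableTypeR R -> measurableTypeR R).
  exact (nd_on_measurable Q (galois_nd F Q gQ)).
exact: (proj1 (measurable_restrictT _ mD01) h).
Qed.

Definition Pm : {measure set (measurableTypeR R) -> \bar R}.
refine (pushforward (mrestr (@lebesgue_measure R) mD01)
  ((Q : measurableTypeR R -> measurableTypeR R) \_ D01)
  : {measure set _ -> \bar R}).
all: exact mQ.
Defined.

Lemma Pm_oc (a b : R) : (a <= b)%R -> Pm `]a, b]%classic = (F b - F a)%:E.
Proof.
move=> ab; have u := cdf_unit F cF.
rewrite /Pm /= /pushforward /mrestr.
have /andP[Fa0 Fa1] := u a; have /andP[Fb0 Fb1] := u b.
have Fab : (F a <= F b)%R by case: cF => nd _ _ _; exact: nd.
have -> : (Q \_ D01) @^-1` `]a, b] `&` D01 = `]F a, F b]%classic `&` D01.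
  apply/seteqP; split => x [] /= h xD.
  - have hx := proj1 (itv_ooP _ _ _) xD.
    split => //; move: h; rewrite patchT; last exact: (mem_set xD).
    move=> h.
    have /andP[aQ Qb] := proj1 (itv_ocP _ _ _) h.
    apply: (proj2 (itv_ocP _ _ _)).
    apply/andP; split; last exact/(gQ x b hx).1.
    by rewrite ltNge; apply/negP => /(gQ x a hx).2; rewrite leNgt aQ.
  - have hx := proj1 (itv_ooP _ _ _) xD.
    split => //; rewrite patchT; last exact: (mem_set xD).
    have /andP[aQ Qb] := proj1 (itv_ocP _ _ _) h.
    apply: (proj2 (itv_ocP _ _ _)).
    apply/andP; split; last exact/(gQ x b hx).2.
    by rewrite ltNge; apply/negP => /(gQ x a hx).1; rewrite leNgt aQ.
have [Fb1'|Fb1'] := ltP (F b) 1%R.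
- have -> : `]F a, F b]%classic `&` D01 = `]F a, F b]%classic.
    apply/seteqP; split => x; first by case.
    move=> h; split => //; apply: (proj2 (itv_ooP _ _ _)).
    have /andP[h1 h2] := proj1 (itv_ocP _ _ _) h.
    by apply/andP; split; lra.
  rewrite lebesgue_measure_itv /= lte_fin.
  case: ifPn => h; first by rewrite EFinB.
  rewrite -leNgt in h.
  have -> : F a = F b by apply/eqP; rewrite eq_le h Fab.
  by rewrite subrr.
- have -> : `]F a, F b]%classic `&` D01 = `]F a, 1%R[%classic.
    apply/seteqP; split => x.
    + case=> h xD; apply: (proj2 (itv_ooP _ _ _)).
      have /andP[h1 h2] := proj1 (itv_ocP _ _ _) h.
      have /andP[h3 h4] := proj1 (itv_ooP _ _ _) xD.
      by rewrite h1 h4.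
    + move=> h; have /andP[h1 h2] := proj1 (itv_ooP _ _ _) h.
      split; [apply: (proj2 (itv_ocP _ _ _)) | apply: (proj2 (itv_ooP _ _ _))];
        apply/andP; split; lra.
  have -> : F b = 1%R by apply/eqP; rewrite eq_le Fb1 Fb1'.
  rewrite lebesgue_measure_itv /= lte_fin.
  case: ifPn => h; first by rewrite EFinB.
  rewrite -leNgt in h.
  have -> : F a = 1%R by apply/eqP; rewrite eq_le h Fa1.
  by rewrite subrr.
Qed.

Lemma law_push A : measurable A -> law F A = Pm A.
Proof.
move=> mA; apply: lebesgue_stieltjes_measure_unique => // I [[a b]] /= _ <-.
have [ab|ba] := leP a b.
  by have := law_oc F a b cF ab; rewrite /law => ->; rewrite Pm_oc.
by rewrite set_itv_ge ?measure0 // bnd_simp -leNgt ltW.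
Qed.

Lemma law_int (phi : R -> R) : measurable_fun setT phi -> (forall x, 0 <= phi x)%R ->
  \int[law F]_x (phi x)%:E =
  \int[@lebesgue_measure R]_(p in D01) (phi (Q p))%:E.
Proof.
move=> mphi phi0.
rewrite (eq_measure_integral Pm); last by move=> A mA _; exact: law_push.
rewrite /Pm /=.
rewrite ge0_integral_pushforward //; last 2 first.
- exact/measurable_EFinP.
- by move=> y _; rewrite lee_fin.
rewrite preimage_setT integral_mrestr; last 2 first.
- by apply/measurable_EFinP; apply: measurableT_comp.
- by move=> x /=; rewrite lee_fin.
apply: eq_integral => x xD /=.
by rewrite patchT.
Qed.

End law_push.

End P3.
#[global] Hint Resolve mD01 : core.
Section P4.
Context {R : realType}.
Local Notation lam := (@lebesgue_measure R).

Definition pp (t x : R) : R := Num.max (x - t) 0.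
Definition piQ (Q : R -> R) (t : R) : \bar R :=
  (\int[lam]_(p in D01) (pp t (Q p))%:E)%E.

Lemma pp_ge0 t x : 0 <= pp t x. Proof. by rewrite /pp le_max lexx orbT. Qed.

Lemma pp_le t y z : y - t <= z -> 0 <= z -> pp t y <= z.
Proof. by move=> h1 h2; rewrite /pp ge_max h1 h2. Qed.
Lemma pp_ge t y : y - t <= pp t y.
Proof. by rewrite /pp le_max lexx. Qed.
Lemma pp_eq t y : t <= y -> pp t y = y - t.
Proof. by move=> h; rewrite /pp max_l // subr_ge0. Qed.
Lemma pp_eq0 t y : y <= t -> pp t y = 0.
Proof. by move=> h; rewrite /pp max_r // subr_le0. Qed.

Lemma pp_nd t : {homo pp t : x y / x <= y}.
Proof.
move=> x y xy; apply: pp_le; last exact: pp_ge0.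
by apply: le_trans (pp_ge t y); lra.
Qed.

Lemma pp_meas t : measurable_fun [set: measurableTypeR R] (pp t).
Proof. exact (@nondecreasing_measurable R setT (pp t) measurableT (@pp_nd t)). Qed.

Lemma abs_meas : measurable_fun [set: measurableTypeR R] (@Num.norm _ R).
Proof. exact (@normr_measurable R setT). Qed.

Lemma Qmeas (Q : R -> R) : nd_on Q -> measurable_fun D01 Q.
Proof. move=> h; exact (nd_on_measurable Q h). Qed.

Lemma ppQ_meas Q t : nd_on Q -> measurable_fun D01 (fun p => (pp t (Q p))%:E).
Proof.
move=> h; apply/measurable_EFinP.
exact (measurableT_comp (pp_meas t) (Qmeas Q h)).
Qed.

Lemma absQ_meas Q : nd_on Q -> measurable_fun D01 (fun p => (`|Q p| : R)%:E).
Proof.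
move=> h; apply/measurable_EFinP.
exact (measurableT_comp abs_meas (Qmeas Q h)).
Qed.

Lemma lamD01 : lam (@D01 R) = 1%E.
Proof. by rewrite /D01 (@lebesgue_measure_itv R) /= lte_fin ltr01 sube0. Qed.

Lemma int_lin n (c : 'I_n -> R) (f : 'I_n -> R -> R) :
  (forall j, 0 <= c j) -> (forall j, measurable_fun D01 (fun p => (f j p)%:E)) ->
  (forall j p, 0 <= f j p) ->
  (\int[lam]_(p in D01) (\sum_j c j * f j p)%:E =
   \sum_j (c j)%:E * \int[lam]_(p in D01) (f j p)%:E)%E.
Proof.
move=> c0 mf f0.
under eq_integral do rewrite -sumEFin.
rewrite ge0_integral_sum //; last 2 first.
- move=> j; rewrite /=; under eq_fun do rewrite EFinM.
  apply: emeasurable_funM => //; exact: measurable_cst.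
- by move=> j x _; rewrite lee_fin mulr_ge0.
apply: eq_bigr => j _; under eq_integral do rewrite EFinM.
by rewrite ge0_integralZl_EFin // => x _; rewrite lee_fin.
Qed.

Lemma piQ_ge0 Q t : (0 <= piQ Q t)%E.
Proof. by apply: integral_ge0 => x _; rewrite lee_fin pp_ge0. Qed.

Lemma piQ_fin Q : nd_on Q ->
  (\int[lam]_(p in D01) (`|Q p| : R)%:E < +oo)%E -> forall t, piQ Q t \is a fin_num.
Proof.
move=> nd fin t; rewrite ge0_fin_numE ?piQ_ge0 //.
apply: (le_lt_trans (y := (\int[lam]_(p in D01) ((`|Q p| : R)%:E + (`|t| : R)%:E))%E)).
  apply: ge0_le_integral => //.
  - by move=> x _; rewrite lee_fin pp_ge0.
  - exact: ppQ_meas.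
  - apply: emeasurable_funD; first exact: absQ_meas.
    exact: measurable_cst.
  - move=> x _; rewrite -EFinD lee_fin /pp.
    have := ler_norm (Q x); have := ler_norm (- t); rewrite normrN.
    have := normr_ge0 (Q x); have := normr_ge0 t.
    by move=> *; apply: pp_le; lra.
rewrite ge0_integralD //; last 3 first.
- by move=> x _; rewrite lee_fin.
- exact: absQ_meas.
- by move=> x _; rewrite lee_fin.
apply: lte_add_pinfty => //.
rewrite integral_cst // (_ : _ D01 = 1%E) ?mule1 ?ltry //; exact: lamD01.
Qed.


Lemma itv_coP (y c d : R) : (y \in `[c, d[) <-> (c <= y < d)%R.
Proof. by rewrite in_itv. Qed.

Lemma D01P (y : R) : D01 y <-> (0 < y < 1)%R.
Proof. by rewrite /D01 /=; exact: itv_ooP. Qed.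

Lemma min_prop Q : nd_on Q -> (forall t, piQ Q t \is a fin_num) ->
  forall a t, 0 < a < 1 ->
  (1 - a) * Q a + fine (piQ Q (Q a)) <= (1 - a) * t + fine (piQ Q t).
Proof.
move=> nd fin a t ha; have /andP[a0 a1] := ha.
set T := Q a.
pose A : set (measurableTypeR R) := `[a, 1%R[%classic.
have mA : measurable A by exact: measurable_itv.
have mI : measurable_fun D01 (fun p => (indic A p : R)%:E).
  by apply/measurable_EFinP; exact: measurable_indic.
have lamA : (\int[lam]_(p in D01) (indic A p : R)%:E = (1 - a)%:E)%E.
  rewrite integral_indic //.
  have -> : A `&` D01 = A.
    apply/seteqP; split => x; first by case.
    move=> h; split => //; apply/D01P.
    have /andP[h1 h2] := proj1 (itv_coP _ _ _) h.
    by apply/andP; split; lra.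
  apply: (@eq_trans _ _ (lam A)); first by [].
  by rewrite /A lebesgue_measure_itv /= lte_fin a1 EFinB.
have iA (p : R) : D01 p -> indic A p = ((a <= p)%R)%:R :> R.
  move=> /D01P /andP[p0 p1]; rewrite indicE.
  case: (leP a p) => ap.
    by rewrite mem_set //; apply/(proj2 (itv_coP _ _ _)); rewrite ap p1.
  rewrite memNset //= => h.
  by have /andP[h1 _] := proj1 (itv_coP _ _ _) h; lra.
have QA (p : R) : D01 p -> a <= p -> T <= Q p.
  by move=> /D01P /andP[p0 p1] ap; apply: nd.
have QnA (p : R) : D01 p -> p < a -> Q p <= T.
  by move=> /D01P /andP[p0 p1] pa; apply: nd => //; exact: ltW.
have fT := fineK (fin T); have ft := fineK (fin t).
have mpp s : measurable_fun D01 (fun p => (pp s (Q p))%:E) by exact: ppQ_meas.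
have pp0 s : forall p, D01 p -> (0 <= (pp s (Q p))%:E)%E.
  by move=> p _; rewrite lee_fin pp_ge0.
have EZ c : 0 <= c ->
    (\int[lam]_(p in D01) (c%:E * (indic A p : R)%:E) = c%:E * (1 - a)%:E)%E.
  move=> c0; rewrite ge0_integralZl_EFin //; first by rewrite lamA.
  by move=> p _; rewrite lee_fin indicE.
have mZ c : measurable_fun D01 (fun p => (c%:E * (indic A p : R)%:E)%E).
  by apply: emeasurable_funM => //; exact: measurable_cst.
have Z0 c : 0 <= c -> forall p, D01 p -> (0 <= c%:E * (indic A p : R)%:E)%E.
  by move=> c0 p _; rewrite -EFinM lee_fin mulr_ge0 // indicE.
case: (leP T t) => Tt.
- have H : (piQ Q T <= piQ Q t + (t - T)%:E * (1 - a)%:E)%E.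
    rewrite -EZ; last lra.
    rewrite /piQ -ge0_integralD //; try (by apply: pp0); try (by apply: Z0; lra);
      try (exact: mZ).
    apply: ge0_le_integral => //; try (by apply: pp0);
      try (exact: (emeasurable_funD (mpp t) (mZ (t - T)))); try (exact: mpp).
    + move=> p Dp; rewrite -EFinM -EFinD lee_fin iA //.
      case: (leP a p) => ap.
        rewrite pp_eq ?QA // mulr1.
        by have := pp_ge t (Q p); lra.
      by rewrite pp_eq0 ?QnA // mulr0 addr0 pp_ge0.
  move: H; rewrite -fT -ft -EFinM -EFinD lee_fin => H.
  nra.
- have H : (piQ Q T + (T - t)%:E * (1 - a)%:E <= piQ Q t)%E.
    rewrite -EZ; last lra.
    rewrite /piQ -ge0_integralD //; try (by apply: pp0); try (by apply: Z0; lra);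
      try (exact: mZ).
    apply: ge0_le_integral => //;
      try (by move=> p Dp; apply: adde_ge0; [exact: pp0 | apply: Z0 => //; lra]);
      try (exact: (emeasurable_funD (mpp T) (mZ (T - t)))); try (exact: mpp).
    + move=> p Dp; rewrite -EFinM -EFinD lee_fin iA //.
      case: (leP a p) => ap.
        rewrite pp_eq ?QA // mulr1.
        by have := pp_ge t (Q p); lra.
      by rewrite pp_eq0 ?QnA // mulr0 addr0 pp_ge0.
  move: H; rewrite -fT -ft -EFinM -EFinD lee_fin => H.
  nra.
Qed.

End P4.
Section P5.
Context {R : realType}.
Local Notation lam := (@lebesgue_measure R).

Lemma deriv_claim (Q1 Q2 p1 p2 : R -> R) :
  (forall a t, 0 < a < 1 -> (1 - a) * Q1 a + p1 (Q1 a) <= (1 - a) * t + p1 t) ->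
  (forall a t, 0 < a < 1 -> (1 - a) * Q2 a + p2 (Q2 a) <= (1 - a) * t + p2 t) ->
  (forall a, 0 < a < 1 -> (1 - a) * Q1 a + p1 (Q1 a) = (1 - a) * Q2 a + p2 (Q2 a)) ->
  forall a b, 0 < a -> a < b -> b < 1 -> Q1 a <= Q2 b.
Proof.
move=> m1 m2 e a b a0 ab b1.
have ha : 0 < a < 1 by apply/andP; split; lra.
have hb : 0 < b < 1 by apply/andP; split; lra.
have h1 := m1 b (Q1 a) hb.
have h2 := m2 a (Q2 b) ha.
have e1 := e a ha; have e2 := e b hb.
nra.
Qed.

Lemma deriv_step (Q1 Q2 p1 p2 : R -> R) :
  lc_on Q1 -> lc_on Q2 ->
  (forall a t, 0 < a < 1 -> (1 - a) * Q1 a + p1 (Q1 a) <= (1 - a) * t + p1 t) ->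
  (forall a t, 0 < a < 1 -> (1 - a) * Q2 a + p2 (Q2 a) <= (1 - a) * t + p2 t) ->
  (forall a, 0 < a < 1 -> (1 - a) * Q1 a + p1 (Q1 a) = (1 - a) * Q2 a + p2 (Q2 a)) ->
  forall a, 0 < a < 1 -> Q1 a = Q2 a.
Proof.
move=> lc1 lc2 m1 m2 e b hb; have /andP[b0 b1] := hb.
have c12 := @deriv_claim Q1 Q2 p1 p2 m1 m2 e.
have c21 := @deriv_claim Q2 Q1 p2 p1 m2 m1 (fun a ha => esym (e a ha)).
apply/eqP; rewrite eq_le; apply/andP; split.
- rewrite leNgt; apply/negP => h.
  have [a [/andP[a0 ab] h']] := lc1 b (Q2 b) hb h.
  by have := c12 a b a0 ab b1; rewrite leNgt h'.
- rewrite leNgt; apply/negP => h.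
  have [a [/andP[a0 ab] h']] := lc2 b (Q1 b) hb h.
  by have := c21 a b a0 ab b1; rewrite leNgt h'.
Qed.

Lemma pp_mix n (c : 'I_n -> R) (q : 'I_n -> R -> R) a p :
  (forall j, 0 <= c j) -> (forall j, nd_on (q j)) -> 0 < a < 1 -> 0 < p < 1 ->
  pp (\sum_j c j * q j a) (\sum_j c j * q j p) = \sum_j c j * pp (q j a) (q j p).
Proof.
move=> c0 nd /andP[a0 a1] /andP[p0 p1].
case: (leP a p) => ap.
- have le j : q j a <= q j p by apply: nd.
  rewrite pp_eq; last by apply: ler_sum => j _; apply: ler_wpM2l => //; exact: le.
  rewrite -sumrB; apply: eq_bigr => j _.
  by rewrite pp_eq ?le // mulrBr.
- have le j : q j p <= q j a by apply: nd => //; exact: ltW.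
  rewrite pp_eq0; last by apply: ler_sum => j _; apply: ler_wpM2l => //; exact: le.
  by rewrite big1 // => j _; rewrite pp_eq0 ?le // mulr0.
Qed.

Lemma piQ_mix n (c : 'I_n -> R) (q : 'I_n -> R -> R) a :
  (forall j, 0 <= c j) -> (forall j, nd_on (q j)) -> 0 < a < 1 ->
  piQ (fun p => \sum_j c j * q j p) (\sum_j c j * q j a) =
  (\sum_j (c j)%:E * piQ (q j) (q j a))%E.
Proof.
move=> c0 nd ha; rewrite /piQ.
transitivity (\int[lam]_(p in D01) (\sum_j c j * pp (q j a) (q j p))%:E)%E.
  apply: eq_integral => p /set_mem Dp.
  by rewrite pp_mix //; apply/D01P.
rewrite int_lin //.
- by move=> j; exact: ppQ_meas.
- by move=> j p; exact: pp_ge0.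
Qed.

Lemma abs_mix_fin n (c : 'I_n -> R) (q : 'I_n -> R -> R) :
  (forall j, 0 <= c j) -> (forall j, nd_on (q j)) ->
  (forall j, \int[lam]_(p in D01) (`|q j p| : R)%:E < +oo)%E ->
  (\int[lam]_(p in D01) (`|\sum_j c j * q j p| : R)%:E < +oo)%E.
Proof.
move=> c0 nd fin.
have ndm : nd_on (fun p => \sum_j c j * q j p) by exact: mix_nd.
apply: (le_lt_trans (y := (\int[lam]_(p in D01) (\sum_j c j * `|q j p|)%:E)%E)).
  apply: ge0_le_integral => //.
  - by move=> x _; rewrite lee_fin.
  - exact: absQ_meas.
  - apply/measurable_EFinP.
    apply: measurable_sum => j; apply: measurable_funM; first exact: measurable_cst.
    exact (measurableT_comp abs_meas (Qmeas (q j) (nd j))).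
  - move=> x _; rewrite lee_fin; apply: (le_trans (ler_norm_sum _ _ _)).
    by apply: ler_sum => j _; rewrite normrM ger0_norm.
rewrite int_lin //.
- apply: lte_sum_pinfty => j _.
  have h : (\int[lam]_(p in D01) (`|q j p| : R)%:E)%E \is a fin_num.
    by rewrite ge0_fin_numE ?fin //; apply: integral_ge0 => x _; rewrite lee_fin.
  by rewrite -(fineK h) -EFinM ltry.
all: try (by move=> j; exact: absQ_meas).
all: try (by move=> j p; exact: normr_ge0).
Qed.

End P5.
Section P2.
Context {R : realType}.
Variables (n : nat) (L : 'M[R]_n) (hL : doubly_stochastic L).
Variable F : 'I_n -> R -> R.
Hypothesis hF : forall j, is_cdf (F j).

Let L0 i j : 0 <= L i j. Proof. by case: hL. Qed.
Let Lr i : \sum_j L i j = 1. Proof. by case: hL. Qed.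
Let Lc j : \sum_i L i j = 1. Proof. by case: hL. Qed.

Lemma mix_sum (a : 'I_n -> R) : \sum_i \sum_j L i j * a j = \sum_j a j.
Proof.
rewrite exchange_big /=; apply: eq_bigr => j _.
by rewrite -mulr_suml Lc mul1r.
Qed.

Lemma part_i : (st_le (dmix L F) F <-> dmix L F = F) /\
  (st_le F (dmix L F) <-> dmix L F = F).
Proof.
split; split; try by move=> ->; move=> i x.
- move=> h; apply/funext => i; apply/funext => x.
  apply/esym; apply: (@sum_le_eq _ _ (fun i => F i x) (fun i => dmix L F i x)).
    by move=> k; exact: h.
  by rewrite /dmix mix_sum.
- move=> h; apply/funext => i; apply/funext => x.
  apply: (@sum_le_eq _ _ (fun i => dmix L F i x) (fun i => F i x)).
    by move=> k; exact: h.
  by rewrite /dmix mix_sum.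
Qed.

Let q j := quantile (F j).
Let Q i := fun p => \sum_j L i j * q j p.

Let gF j : galois (F j) (q j). Proof. exact: quantile_galois. Qed.
Let uF j : unitv (F j). Proof. exact: cdf_unit. Qed.
Let ndq j : nd_on (q j). Proof. exact: galois_nd (gF j). Qed.
Let lcq j : lc_on (q j). Proof. exact: galois_lc (uF j) (gF j). Qed.
Lemma ndQ i : nd_on (Q i). Proof. exact: mix_nd. Qed.
Lemma lcQ i : lc_on (Q i). Proof. exact: mix_lc. Qed.
Lemma gG i : galois (qmix L F i) (Q i). Proof. by have [] := @cdfq_galois _ (Q i) (ndQ i) (lcQ i). Qed.
Lemma uG i : unitv (qmix L F i). Proof. by have [] := @cdfq_galois _ (Q i) (ndQ i) (lcQ i). Qed.

Lemma Qq_eq : ((forall i p, 0 < p < 1 -> Q i p <= q i p) \/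
               (forall i p, 0 < p < 1 -> q i p <= Q i p)) ->
  forall i p, 0 < p < 1 -> Q i p = q i p.
Proof.
move=> h i p hp.
have s : \sum_i Q i p = \sum_i q i p by rewrite /Q mix_sum.
case: h => h.
- by apply: (@sum_le_eq _ _ (fun i => Q i p) (fun i => q i p)) => // k; exact: h.
- by apply/esym; apply: (@sum_le_eq _ _ (fun i => q i p) (fun i => Q i p)) => // k; exact: h.
Qed.

Lemma Qq_qmix : (forall i p, 0 < p < 1 -> Q i p = q i p) -> qmix L F = F.
Proof.
move=> e; apply/funext => i; apply/funext => x; apply/eqP; rewrite eq_le.
apply/andP; split.
- apply: (@galois_le _ (qmix L F i) (F i) (Q i) (q i) (uG i) (uF i) (gG i) (gF i)) => p hp; by rewrite e.
- apply: (@galois_le _ (F i) (qmix L F i) (q i) (Q i) (uF i) (uG i) (gF i) (gG i)) => p hp; by rewrite e.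
Qed.

Lemma part_ii : (st_le (qmix L F) F <-> qmix L F = F) /\
  (st_le F (qmix L F) <-> qmix L F = F).
Proof.
split; split; try by move=> ->; move=> i x.
- move=> h; apply: Qq_qmix; apply: Qq_eq; left => i p hp.
  apply/(gG i p (q i p) hp).2; apply: (le_trans _ (h i _)).
  exact/(gF i p (q i p) hp).1.
- move=> h; apply: Qq_qmix; apply: Qq_eq; right => i p hp.
  apply/(gF i p (Q i p) hp).2; apply: (le_trans _ (h i _)).
  exact/(gG i p (Q i p) hp).1.
Qed.


Lemma pp_convex (t : R) : convex_fun (pp t).
Proof.
move=> x y s /andP[s0 s1].
apply: pp_le.
  have := pp_ge t x; have := pp_ge t y.
  have := pp_ge0 t x; have := pp_ge0 t y; nra.
have := pp_ge0 t x; have := pp_ge0 t y; nra.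
Qed.

Let cG i : is_cdf (qmix L F i). Proof. exact: galois_cdf (uG i) (gG i). Qed.

Let pi_law (G Qg : R -> R) t : is_cdf G -> galois G Qg ->
  (\int[law G]_x (pp t x)%:E = piQ Qg t)%E.
Proof.
move=> cg gg; rewrite (@law_int R G Qg cg gg) //;
  try exact: pp_meas; try (by move=> x; exact: pp_ge0).
Qed.

Let abs_law (G Qg : R -> R) : is_cdf G -> galois G Qg -> finite_mean G ->
  (\int[@lebesgue_measure R]_(p in D01) (`|Qg p| : R)%:E < +oo)%E.
Proof.
move=> cg gg; rewrite /finite_mean (@law_int R G Qg cg gg) //;
  try exact: abs_meas; try (by move=> x; exact: normr_ge0).
Qed.

Section fm.
Hypothesis hm : forall j, finite_mean (F j).

Let finq j t : piQ (q j) t \is a fin_num.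
Proof. exact: (@piQ_fin R (q j) (ndq j) (@abs_law (F j) (q j) (hF j) (gF j) (hm j))). Qed.

Let finQ i t : piQ (Q i) t \is a fin_num.
Proof.
apply: (@piQ_fin R (Q i) (ndQ i)); apply: abs_mix_fin => // j.
exact: (@abs_law (F j) (q j) (hF j) (gF j) (hm j)).
Qed.

Let a_ i (al : R) := (1 - al) * q i al + fine (piQ (q i) (q i al)).
Let b_ i (al : R) := (1 - al) * Q i al + fine (piQ (Q i) (Q i al)).

Let b_mix i al : 0 < al < 1 -> b_ i al = \sum_j L i j * a_ j al.
Proof.
move=> ha.
have e : piQ (Q i) (Q i al) =
    (\sum_j L i j * fine (piQ (q j) (q j al)))%:E.
  rewrite /Q piQ_mix //; rewrite -sumEFin; apply: eq_bigr => j _.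
  by rewrite EFinM fineK.
rewrite /b_ e /= /a_ /Q.
rewrite mulr_sumr -big_split /=; apply: eq_bigr => j _.
ring.
Qed.

Let sum_ab al : 0 < al < 1 -> \sum_i b_ i al = \sum_i a_ i al.
Proof.
move=> ha; under eq_bigr do rewrite b_mix //.
by rewrite mix_sum.
Qed.

Let mpq j : forall al t, 0 < al < 1 ->
  (1 - al) * q j al + fine (piQ (q j) (q j al)) <=
  (1 - al) * t + fine (piQ (q j) t).
Proof. exact: (@min_prop R (q j) (ndq j) (finq j)). Qed.

Let mpQ i : forall al t, 0 < al < 1 ->
  (1 - al) * Q i al + fine (piQ (Q i) (Q i al)) <=
  (1 - al) * t + fine (piQ (Q i) t).
Proof. exact: (@min_prop R (Q i) (ndQ i) (finQ i)). Qed.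

Let conclude : (forall i al, 0 < al < 1 -> b_ i al = a_ i al) -> qmix L F = F.
Proof.
move=> e; apply: Qq_qmix; apply: Qq_eq; left => i p hp.
rewrite (@deriv_step _ (Q i) (q i) (fun t => fine (piQ (Q i) t))
   (fun t => fine (piQ (q i) t)) (lcQ i) (lcq i) (mpQ i) (mpq i)) //.
by move=> al hal; have := e i al hal.
Qed.

Lemma part_iii : (cx_le (qmix L F) F <-> qmix L F = F) /\
  (cx_le F (qmix L F) <-> qmix L F = F).
Proof.
split; split; try by move=> -> i phi _; exact: lexx.
- move=> h; apply: conclude => i al hal.
  have le : forall k t, fine (piQ (Q k) t) <= fine (piQ (q k) t).
    move=> k t; apply: fine_le => //.
    have := h k (pp t) (pp_convex t).
    by rewrite (@pi_law _ _ t (cG k) (gG k)) (@pi_law _ _ t (hF k) (gF k)).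
  apply: (@sum_le_eq _ _ (fun i => b_ i al) (fun i => a_ i al)); last exact: sum_ab.
  move=> k; apply: (le_trans (mpQ k al (q k al) hal)).
  by rewrite /a_ lerD2l; exact: le.
- move=> h; apply: conclude => i al hal; apply/esym.
  have le : forall k t, fine (piQ (q k) t) <= fine (piQ (Q k) t).
    move=> k t; apply: fine_le => //.
    have := h k (pp t) (pp_convex t).
    by rewrite (@pi_law _ _ t (cG k) (gG k)) (@pi_law _ _ t (hF k) (gF k)).
  apply: (@sum_le_eq _ _ (fun i => a_ i al) (fun i => b_ i al)); last exact/esym/sum_ab.
  move=> k; apply: (le_trans (mpq k al (Q k al) hal)).
  by rewrite /b_ lerD2l; exact: le.
Qed.

End fm.


Lemma cvg_fsum {T} (Fl : set_system T) {FF : Filter Fl} (c : 'I_n -> R)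
    (f : 'I_n -> T -> R) (l : 'I_n -> R) :
  (forall j, f j @ Fl --> l j) ->
  (fun x => \sum_j c j * f j x) @ Fl --> \sum_j c j * l j.
Proof.
move=> hf.
suff H : forall s : seq 'I_n,
    (fun x => \sum_(j <- s) c j * f j x) @ Fl --> \sum_(j <- s) c j * l j.
  exact: H.
elim => [|j s ih].
  under eq_fun do rewrite big_nil.
  by rewrite big_nil; exact: cvg_cst.
under eq_fun do rewrite big_cons.
rewrite big_cons.
apply: (@cvgD _ _ _ _ _ (fun x => c j * f j x)) => //.
exact: (cvgM (cvg_cst (c j)) (hf j)).
Qed.

Let cH i : is_cdf (dmix L F i).
Proof.
have hF' j := hF j.
split.
- move=> x y xy; apply: ler_sum => j _; apply: ler_wpM2l => //.
  by case: (hF j) => nd _ _ _; exact: nd.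
- move=> x; rewrite /dmix.
  apply: cvg_fsum => j; by case: (hF j) => _ rc _ _; exact: rc.
- have -> : (0 : R) = \sum_j L i j * 0 by rewrite big1 // => j _; rewrite mulr0.
  by apply: cvg_fsum => j; case: (hF j).
- have -> : (1 : R) = \sum_j L i j * 1 by under eq_bigr do rewrite mulr1.
  by apply: cvg_fsum => j; case: (hF j).
Qed.


Let mk i : {measure set (measurableTypeR R) -> \bar R}^nat := fun k =>
  match (insub k : option 'I_n) with
  | Some j => mscale (interval_inference.NngNum (L0 i j)) (law (F j))
  | None => mzero
  end.

Let mkE i (j : 'I_n) A : mk i j A = ((L i j)%:E * law (F j) A)%E.
Proof. by rewrite /mk valK. Qed.

Let law_mix i A : measurable A -> law (dmix L F i) A = msum (mk i) n A.
Proof.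
move=> mA; apply: lebesgue_stieltjes_measure_unique => // I [[a b]] /= _ <-.
have [ab|ba] := leP a b; last first.
  by rewrite set_itv_ge ?measure0 // bnd_simp -leNgt ltW.
have := law_oc (dmix L F i) a b (cH i) ab; rewrite /law => ->.
rewrite /msum /=.
under eq_bigr => j _ do rewrite mkE.
under eq_bigr => j _ do rewrite (law_oc (F j) a b (hF j) ab).
under [RHS]eq_bigr => j _ do rewrite -EFinM.
rewrite sumEFin /dmix -sumrB; congr EFin; apply: eq_bigr => j _.
by rewrite mulrBr.
Qed.

Lemma int_mix i (phi : R -> R) : measurable_fun [set: measurableTypeR R] phi ->
  (forall x, 0 <= phi x) ->
  (\int[law (dmix L F i)]_x (phi x)%:E =
   \sum_j (L i j)%:E * \int[law (F j)]_x (phi x)%:E)%E.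
Proof.
move=> mphi phi0.
rewrite (eq_measure_integral (msum (mk i) n)); last by move=> A mA _; exact: law_mix.
rewrite ge0_integral_measure_sum //; last 2 first.
- by move=> x _; rewrite lee_fin.
- exact/measurable_EFinP.
apply: eq_bigr => j _.
rewrite /mk valK ge0_integral_mscale //.
- exact/measurable_EFinP.
- by move=> x _; rewrite lee_fin.
Qed.


Section fm4.
Hypothesis hm : forall j, finite_mean (F j).

Let qH i := quantile (dmix L F i).
Let gH i : galois (dmix L F i) (qH i). Proof. exact: quantile_galois. Qed.
Let uH i : unitv (dmix L F i). Proof. exact: cdf_unit. Qed.
Let ndqH i : nd_on (qH i). Proof. exact: galois_nd (gH i). Qed.
Let lcqH i : lc_on (qH i). Proof. exact: galois_lc (uH i) (gH i). Qed.

Let finq4 j t : piQ (q j) t \is a fin_num.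
Proof. exact: (@piQ_fin R (q j) (ndq j) (@abs_law (F j) (q j) (hF j) (gF j) (hm j))). Qed.

Lemma part_iv : cx_le (dmix L F) F <-> dmix L F = F.
Proof.
split; last by move=> -> i phi _; exact: lexx.
move=> h.
have eqpi : forall i t, piQ (qH i) t = piQ (q i) t.
  move=> t0 t.
  pose c k := fine (piQ (q k) t).
  have ec k : (\int[law (F k)]_x (pp t x)%:E)%E = (c k)%:E.
    by rewrite (@pi_law _ _ t (hF k) (gF k)) /c fineK.
  have ed k : (\int[law (dmix L F k)]_x (pp t x)%:E)%E = (\sum_j L k j * c j)%:E.
    rewrite int_mix; last 2 first.
    - exact: pp_meas.
    - by move=> x; exact: pp_ge0.
    rewrite -sumEFin; apply: eq_bigr => j _.
    by rewrite ec EFinM.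
  have le k : \sum_j L k j * c j <= c k.
    have := h k (pp t) (pp_convex t).
    by rewrite ec ed lee_fin.
  have := @sum_le_eq _ _ (fun k => \sum_j L k j * c j) c le (mix_sum c).
  move=> /(_ t0) e.
  rewrite -(@pi_law _ _ t (cH t0) (gH t0)) ed e.
  by rewrite -(@pi_law _ _ t (hF t0) (gF t0)) ec.
have finH i t : piQ (qH i) t \is a fin_num by rewrite eqpi.
apply/funext => i; apply/funext => x.
have mp1 := @min_prop R (qH i) (ndqH i) (finH i).
have mp2 := @min_prop R (q i) (ndq i) (finq4 i).
have e : forall p, 0 < p < 1 -> qH i p = q i p.
  apply: (@deriv_step _ (qH i) (q i) (fun t => fine (piQ (qH i) t))
   (fun t => fine (piQ (q i) t)) (lcqH i) (lcq i) mp1 mp2).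
  move=> al hal; apply/eqP; rewrite eq_le; apply/andP; split.
  - apply: (le_trans (mp1 al (q i al) hal)).
    by rewrite eqpi.
  - apply: (le_trans (mp2 al (qH i al) hal)).
    by rewrite eqpi.
apply/eqP; rewrite eq_le; apply/andP; split.
- apply: (@galois_le _ (dmix L F i) (F i) (qH i) (q i) (uH i) (uF i) (gH i) (gF i)).
  by move=> p hp; rewrite e.
- apply: (@galois_le _ (F i) (dmix L F i) (q i) (qH i) (uF i) (uH i) (gF i) (gH i)).
  by move=> p hp; rewrite e.
Qed.

End fm4.

End P2.

Lemma cb_cdf {R : realType} (F : cumulativeBounded (0:R) 1) : is_cdf (F : R -> R).
Proof.
split.
- exact: cumulative_is_nondecreasing.
- exact: cumulative_is_right_continuous.
- exact: cumulativeNy.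
- exact: cumulativey.
Qed.

Theorem proposition10 (R : realType) (n : nat) (L : 'M[R]_n) :
  doubly_stochastic L ->
  (* (i) *)
  (forall F : 'I_n -> cumulativeBounded (0:R) 1,
     let F' := fun i => (F i : R -> R) in
     (st_le (dmix L F') F' <-> dmix L F' = F') /\
     (st_le F' (dmix L F') <-> dmix L F' = F')) /\
  (* (ii) *)
  (forall F : 'I_n -> cumulativeBounded (0:R) 1,
     let F' := fun i => (F i : R -> R) in
     (st_le (qmix L F') F' <-> qmix L F' = F') /\
     (st_le F' (qmix L F') <-> qmix L F' = F')) /\
  (* (iii) *)
  (forall F : 'I_n -> cumulativeBounded (0:R) 1,
     let F' := fun i => (F i : R -> R) in
     (forall i, finite_mean (F' i)) ->
     (cx_le (qmix L F') F' <-> qmix L F' = F') /\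
     (cx_le F' (qmix L F') <-> qmix L F' = F')) /\
  (* (iv) *)
  (forall F : 'I_n -> cumulativeBounded (0:R) 1,
     let F' := fun i => (F i : R -> R) in
     (forall i, finite_mean (F' i)) ->
     (cx_le (dmix L F') F' <-> dmix L F' = F')).
Proof.
move=> hL.
split; [|split; [|split]].
- move=> F F'; exact: (@part_i R n L hL F').
- move=> F F'; exact: (@part_ii R n L hL F' (fun j => cb_cdf (F j))).
- move=> F F' hm; exact: (@part_iii R n L hL F' (fun j => cb_cdf (F j)) hm).
- move=> F F' hm; exact: (@part_iv R n L hL F' (fun j => cb_cdf (F j)) hm).
Qed.
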